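(* Let there be finitely many items with feature vectors $x_i\in\mathbb{R}^d$, a linear weight vector $w\in\mathbb{R}^d$, and a probability distribution $\mathcal{P}$ on pairs $p=(i,j)$ of items. Put $b_p^{(f)}=|x_{if}-x_{jf}|$ and let \[ \mathcal F_*=\{f:\ |w_f|>0\text{ and } \mathbb P_{p\sim\mathcal P}(b_p^{(f)}>0)>0\}. \] Assume $\mathcal P$ is supported on pairs with $\sum_{k\in\mathcal F_*}b_p^{(k)}>0$. For $u=(u_f)_{f\in\mathcal F_*}\in\mathbb{R}^{\mathcal F_*}$ define \[ \rho_p^{(f)}(u)=\frac{e^{u_f}b_p^{(f)}}{\sum_{k\in\mathcal F_*}e^{u_k}b_p^{(k)}},\qquad I_f(u)=\mathbb E_{p\sim\mathcal P}[\rho_p^{(f)}(u)],\qquad I(u)=(I_f(u))_{f\in\mathcal F_*}, \] \[ \Phi(u)=\mathbb E_{p\sim\mathcal P}\Big[\log\Big(\sum_{k\in\mathcal F_*}e^{u_k}b_p^{(k)}\Big)\Big], \] and the factor competition graph $G_{\mathcal P}=(\mathcal F_*,E_{\mathcal P})$ by $\{f,g\}\in E_{\mathcal P}\iff \mathbb P_{p\sim\mathcal P}(b_p^{(f)}b_p^{(g)}>0)>0$ (for $f\ne g$). Then: (1) $I(u)=\nabla\Phi(u)$ for all $u$. (2) The Jacobian $J(u)=\nabla^2\Phi(u)$ equals $\mathbb E_p[\operatorname{Diag}(\rho_p(u))-\rho_p(u)\rho_p(u)^\top]$; in particular for $f\ne g$, $J_{fg}(u)=-\mathbb E[\rho_p^{(f)}(u)\rho_p^{(g)}(u)]\le0$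 and $J_{ff}(u)=\sum_{g\ne f}\mathbb E[\rho_p^{(f)}(u)\rho_p^{(g)}(u)]$. Hence $J(u)$ is a symmetric positive-semidefinite Laplacian-type matrix (nonpositive off-diagonal entries, zero row sums) whose off-diagonal support is contained in $E_{\mathcal P}$. (3) For all $u,u'$, with $\Delta u=u'-u$, \[ \langle\Delta u,I(u')-I(u)\rangle=\int_0^1\Delta u^\top J(u+t\Delta u)\Delta u\,dt\ \ge 0. \] (4) $I(u')=I(u)$ if and only if $\Delta u$ is constant on every connected component of $G_{\mathcal P}$. In particular, if $G_{\mathcal P}$ is connected, then $I(u')=I(u)$ if and only if $u'=u+c\mathbf 1$ for some scalar $c$.
   Context: Interpretation: $u_f=\log|w_f|$ are log-absolute linear weights; $\rho_p^{(f)}(u)$ is then the local influence share $|w_f(x_{if}-x_{jf})|/\sum_k|w_k(x_{ik}-x_{jk})|$, $I(u)$ is the global influence structure, and $I(u')-I(u)$ is Influence Exchange. $\operatorname{Diag}(v)$ is the diagonal matrix with diagonal $v$, and $\mathbf 1$ is the all-ones vector. *)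

(* Defs.v *)
From HB Require Import structures.
From mathcomp Require Import all_boot all_order all_algebra.
From mathcomp Require Import all_classical all_reals all_analysis.
Set Implicit Arguments. Unset Strict Implicit. Unset Printing Implicit Defensive.
Import Order.TTheory GRing.Theory Num.Theory numFieldNormedType.Exports.
Local Open Scope ring_scope.

Section Influence.
Variables (R : realType) (T : finType) (d : nat).
(* items T with feature vectors x i : R^d, weights w : R^d,
   distribution P on pairs of items (a function T*T -> R, assumed
   nonnegative and summing to 1 in the theorem). *)
Variables (x : T -> 'I_d -> R) (w : 'I_d -> R) (P : T * T -> R).

Definition bf (p : T * T) (f : 'I_d) : R := `|x p.1 f - x p.2 f|.

Definition prob (E : pred (T * T)) : R := \sum_(p | E p) P p.

Definition expect (g : T * T -> R) : R := \sum_p P p * g p.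

Definition Fstar : {set 'I_d} :=
  [set f | (0 < `|w f|) && (0 < prob (fun p => 0 < bf p f))].

(* R^{F_*} is identified with 'rV[R]_#|F_*| via the enumeration of F_*. *)
Definition nF : nat := #|Fstar|.
Definition feat (i : 'I_nF) : 'I_d := enum_val i.

Definition b (p : T * T) (i : 'I_nF) : R := bf p (feat i).

Definition Zs (u : 'rV[R]_nF) (p : T * T) : R :=
  \sum_(k < nF) expR (u 0 k) * b p k.

Definition rho (u : 'rV[R]_nF) (p : T * T) (f : 'I_nF) : R :=
  expR (u 0 f) * b p f / Zs u p.

Definition rhov (u : 'rV[R]_nF) (p : T * T) : 'rV[R]_nF := \row_f rho u p f.

Definition Infl (u : 'rV[R]_nF) : 'rV[R]_nF := \row_f expect (fun p => rho u p f).

Definition Phi (u : 'rV[R]_nF) : R := expect (fun p => ln (Zs u p)).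

Definition Jac (u : 'rV[R]_nF) : 'M[R]_nF :=
  \sum_p P p *: (diag_mx (rhov u p) - (rhov u p)^T *m rhov u p).

Definition compEdge : rel 'I_nF :=
  fun f g => (f != g) && (0 < prob (fun p => 0 < b p f * b p g)).

End Influence.

Arguments nF {R T d} x w P.
Arguments feat {R T d} x w P i.
Arguments b {R T d} x w P p i.
Arguments Zs {R T d} x w P u p.
Arguments rho {R T d} x w P u p f.
Arguments rhov {R T d} x w P u p.
Arguments Infl {R T d} x w P u.
Arguments Phi {R T d} x w P u.
Arguments Jac {R T d} x w P u.
Arguments compEdge {R T d} x w P _ _.

(* Main.v *)
From HB Require Import structures.
From mathcomp Require Import all_boot all_order all_algebra.
From mathcomp Require Import all_classical all_reals all_analysis.
From mathcomp Require Import ring lra.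
Require Import Defs.
Set Implicit Arguments. Unset Strict Implicit. Unset Printing Implicit Defensive.
Import Order.TTheory GRing.Theory Num.Theory numFieldNormedType.Exports.
Local Open Scope ring_scope.

Section Gen.
Variable R : realType.

Lemma is_diff_ext (V W : normedModType R) (f g df dg : V -> W) (u : V) :
  is_diff u f df -> (forall y, f y = g y) -> (forall v, df v = dg v) ->
  is_diff u g dg.
Proof.
move=> H fg dfg.
have -> : g = f by apply/funext => y; rewrite fg.
have -> : dg = df by apply/funext => y; rewrite dfg.
exact: H.
Qed.

Lemma is_diff_comp1 (V : normedModType R) (f df : V -> R) (g : R -> R) g' u :
  is_diff u f df -> is_derive (f u) 1 g g' ->
  is_diff u (fun y => g (f y)) (fun v => df v * g').
Proof.
move=> Hf Hg.
have dg : is_diff (f u) g ( *:%R^~ g').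
  apply: DiffDef.
    by apply/derivable1_diffP; exact: ex_derive.
  by rewrite deriv1E ?derive1E ?derive_val //; exact: ex_derive.
have := is_diff_comp Hf dg.
move=> H; eapply is_diff_ext; [exact: H| |] => //.
Qed.

Lemma is_diff_inv (V : normedModType R) (f df : V -> R) u :
  is_diff u f df -> f u != 0 ->
  is_diff u (fun y => (f y)^-1) (fun v => - (f u)^-2 * df v).
Proof.
move=> Hf fu0; apply: DiffDef.
  by apply: differentiableV => //; exact: ex_diff.
by rewrite diffV ?diff_val //; exact: ex_diff.
Qed.

Lemma is_diff_coord n (u : 'rV[R]_n) (j : 'I_n) :
  is_diff u (fun N : 'rV[R]_n => N 0 j) (fun N => N 0 j).
Proof.
have @f : {linear 'rV[R]_n -> R}.
  by exists (fun N : 'rV[R]_n => N 0 j); do 2![eexists]; do ?[constructor];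
     rewrite ?mxE// => ? *; rewrite ?mxE//; move=> ?; rewrite !mxE.
rewrite (_ : (fun _ => _) = f) //; apply: DiffDef.
  exact/linear_differentiable/coord_continuous.
by rewrite diff_lin //; exact: coord_continuous.
Qed.

Lemma is_diff_bigsum (V W : normedModType R) (I : Type) (r : seq I)
    (F dF : I -> V -> W) u :
  (forall i, is_diff u (F i) (dF i)) ->
  is_diff u (fun y => \sum_(i <- r) F i y) (fun v => \sum_(i <- r) dF i v).
Proof.
move=> H; elim: r => [|a r IH].
  eapply is_diff_ext; [exact: (is_diff_cst (0:W) u)| |] => y; by rewrite ?big_nil.
have := is_diffD (H a) IH.
by move=> K; eapply is_diff_ext; [exact: K| |] => y; rewrite ?big_cons.
Qed.

Lemma is_diff_scalel_fun (V W : normedModType R) (c dc : V -> R) (M : W) u :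
  is_diff u c dc -> is_diff u (fun y => c y *: M) (fun v => dc v *: M).
Proof.
move=> H; have := is_diff_comp H (is_diff_scalel (c u) M).
by move=> K; eapply is_diff_ext; [exact: K| |].
Qed.

Lemma is_diff_row n m (F dF : 'rV[R]_n -> 'rV[R]_m) u :
  (forall j, is_diff u (fun y => F y 0 j) (fun v => dF v 0 j)) ->
  is_diff u F dF.
Proof.
move=> H.
have K := @is_diff_bigsum _ _ _ (index_enum 'I_m)
   (fun j y => F y 0 j *: delta_mx 0 j) (fun j v => dF v 0 j *: delta_mx 0 j) u
   (fun j => is_diff_scalel_fun (delta_mx 0 j) (H j)).
eapply is_diff_ext; [exact: K| |] => y; apply/rowP => k; rewrite summxE;
  rewrite (bigD1 k) //= big1 ?addr0; rewrite ?mxE ?eqxx ?mulr1 //;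
  by move=> i ik; rewrite !mxE eq_sym (negbTE ik) andbF mulr0.
Qed.

Lemma diff_bigsum (V : normedModType R) (I : Type) (r : seq I) (F : I -> V -> R) t :
  (forall i, differentiable (F i) t) ->
  differentiable (fun y => \sum_(i <- r) F i y) t.
Proof.
move=> H.
have K : forall i, is_diff t (F i) ('d (F i) t) by move=> i; split.
by case: (is_diff_bigsum r K).
Qed.

Lemma diffM' (V : normedModType R) (f g : V -> R) t :
  differentiable f t -> differentiable g t -> differentiable (fun y => f y * g y) t.
Proof. exact: differentiableM. Qed.

Lemma diffB' (V : normedModType R) (f g : V -> R) t :
  differentiable f t -> differentiable g t -> differentiable (fun y => f y - g y) t.
Proof. exact: differentiableB. Qed.

Lemma diffC' (V : normedModType R) (c : R) t :
  differentiable (fun _ : V => c) t.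
Proof. exact: differentiable_cst. Qed.

End Gen.

Section Model.
Variables (R : realType) (T : finType) (d : nat).
Variables (x : T -> 'I_d -> R) (w : 'I_d -> R) (P : T * T -> R).
Local Notation n := (nF x w P).
Local Notation bb := (b x w P).
Local Notation Z := (Zs x w P).
Local Notation rh := (rho x w P).

Lemma scR (a c : R) : a *: c = a * c.
Proof. by []. Qed.

Lemma b_ge0 p k : 0 <= bb p k.
Proof. exact: normr_ge0. Qed.

Lemma bcase p : (forall k, bb p k = 0) \/ (exists k, 0 < bb p k).
Proof.
case: (pickP (fun k => 0 < bb p k)) => [k Hk|H]; first by right; exists k.
left => k; have := H k; rewrite lt0r b_ge0 andbT => /negbFE/eqP //.
Qed.

Lemma Z_ge0 u p : 0 <= Z u p.
Proof. by apply: sumr_ge0 => k _; rewrite mulr_ge0 ?expR_ge0 ?b_ge0. Qed.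

Lemma Z_pos u p : (exists k, 0 < bb p k) -> 0 < Z u p.
Proof.
move=> [k Hk]; rewrite /Zs (bigD1 k) //=.
by rewrite ltr_wpDr ?mulr_gt0 ?expR_gt0 //; apply: sumr_ge0 => j _;
  rewrite mulr_ge0 ?expR_ge0 ?b_ge0.
Qed.

Lemma Z_zero u p : (forall k, bb p k = 0) -> Z u p = 0.
Proof. by move=> H; rewrite /Zs big1 // => k _; rewrite H mulr0. Qed.

Lemma rho_zero u p f : (forall k, bb p k = 0) -> rh u p f = 0.
Proof. by move=> H; rewrite /rho H mulr0 mul0r. Qed.

Lemma rho_ge0 u p f : 0 <= rh u p f.
Proof. by rewrite /rho divr_ge0 ?Z_ge0 ?mulr_ge0 ?expR_ge0 ?b_ge0. Qed.

Lemma rho_sum1 u p : (exists k, 0 < bb p k) -> \sum_f rh u p f = 1.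
Proof.
move=> H; have Zp := Z_pos u H.
by rewrite /rho -mulr_suml -/(Zs x w P u p) divff // gt_eqF.
Qed.

Lemma rho_sum u p f : rh u p f * \sum_g rh u p g = rh u p f.
Proof.
case: (bcase p) => H; first by rewrite rho_zero // mul0r.
by rewrite rho_sum1 // mulr1.
Qed.

Lemma sum_rho_v u p (v : 'rV[R]_n) : (exists k, 0 < bb p k) ->
  \sum_g rh u p g * v 0 g = (\sum_k v 0 k * expR (u 0 k) * bb p k) / Z u p.
Proof.
move=> H; rewrite mulr_suml; apply: eq_bigr => g _; rewrite /rho.
by ring.
Qed.

Lemma Z_diff u p : is_diff u (fun y => Z y p)
  (fun v => \sum_k v 0 k * expR (u 0 k) * bb p k).
Proof.
have K := @is_diff_bigsum _ _ _ _ (index_enum 'I_n)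
  (fun k (y : 'rV[R]_n) => bb p k *: expR (y 0 k)) (fun k (v : 'rV[R]_n) => bb p k *: (v 0 k * expR (u 0 k))) u
  (fun k => is_diffZ (bb p k) (is_diff_comp1 (is_diff_coord u k) (is_derive_expR _))).
eapply is_diff_ext; [exact: K| |] => y /=.
  by rewrite /Zs; apply: eq_bigr => k _; rewrite mulrC.
apply: eq_bigr => k _ /=. rewrite -[bb p k *: _]/(bb p k * _). by ring.
Qed.

Lemma rho_diff u p f : is_diff u (fun y => rh y p f)
  (fun v => rh u p f * (v 0 f - \sum_g rh u p g * v 0 g)).
Proof.
case: (bcase p) => H.
  eapply is_diff_ext; [exact: (is_diff_cst (0:R) u)| |] => y /=.
    by rewrite rho_zero.
  by rewrite rho_zero // mul0r.
have Zp := Z_pos u H.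
have A := is_diffZ (bb p f) (is_diff_comp1 (is_diff_coord u f) (is_derive_expR (u 0 f))).
have B := is_diff_inv (Z_diff u p) (lt0r_neq0 Zp).
have C := is_diffM A B.
eapply is_diff_ext; [exact: C| |] => y /=.
  by rewrite !fctE /rho -[bb p f *: _]/(bb p f * _) [bb p f * _]mulrC.
rewrite !fctE sum_rho_v // /rho.
set S := \sum_k _.
rewrite -[_ *: (- _ * S)]/(_ * (- _ * S)).
rewrite -[bb p f *: expR _]/(bb p f * expR _).
rewrite -[(Z u p)^-1 *: _]/((Z u p)^-1 * _).
rewrite -[bb p f *: (y 0 f * _)]/(bb p f * (y 0 f * _)).
field; exact: lt0r_neq0.
Qed.

Lemma lnZ_diff u p : is_diff u (fun y => ln (Z y p))
  (fun v => \sum_g rh u p g * v 0 g).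
Proof.
case: (bcase p) => H.
  eapply is_diff_ext; [exact: (is_diff_cst (0:R) u)| |] => y /=.
    by rewrite Z_zero // ln0.
  by rewrite big1 // => g _; rewrite rho_zero // mul0r.
have Zp := Z_pos u H.
have C := is_diff_comp1 (Z_diff u p) (is_derive1_ln Zp).
eapply is_diff_ext; [exact: C| |] => y //=.
by rewrite sum_rho_v.
Qed.

Lemma Phi_diff u : is_diff u (Phi x w P) (fun v => (v *m (Infl x w P u)^T) 0 0).
Proof.
have K := @is_diff_bigsum _ _ _ _ (index_enum (T * T)%type)
  (fun p (y : 'rV[R]_n) => P p *: ln (Z y p))
  (fun p (v : 'rV[R]_n) => P p *: \sum_g rh u p g * v 0 g) u
  (fun p => is_diffZ (P p) (lnZ_diff u p)).
eapply is_diff_ext; [exact: K| |] => y /=.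
  by rewrite /Phi /expect.
rewrite mxE; under [RHS]eq_bigr do rewrite !mxE mulr_sumr.
rewrite exchange_big /=; apply: eq_bigr => p _.
rewrite -[P p *: _]/(P p * _) mulr_sumr; apply: eq_bigr => g _.
by ring.
Qed.

Lemma Jentry u f g : Jac x w P u f g =
  \sum_p P p * (rh u p f *+ (f == g) - rh u p f * rh u p g).
Proof.
rewrite /Jac summxE; apply: eq_bigr => p _.
by rewrite !mxE big_ord1 !mxE.
Qed.

Lemma I_diff u : is_diff u (Infl x w P) (fun v => v *m (Jac x w P u)^T).
Proof.
apply: is_diff_row => j.
have K := @is_diff_bigsum _ _ _ _ (index_enum (T * T)%type)
  (fun p (y : 'rV[R]_n) => P p *: rh y p j)
  (fun p (v : 'rV[R]_n) => P p *: (rh u p j * (v 0 j - \sum_g rh u p g * v 0 g))) u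
  (fun p => is_diffZ (P p) (rho_diff u p j)).
eapply is_diff_ext; [exact: K| |] => y /=.
  by rewrite /Infl mxE /expect.
rewrite mxE; under [RHS]eq_bigr do rewrite !mxE Jentry mulr_sumr.
rewrite exchange_big /=; apply: eq_bigr => p _.
rewrite -[P p *: _]/(P p * _).
under [RHS]eq_bigr do rewrite mulrCA.
rewrite -mulr_sumr; congr (P p * _).
under [RHS]eq_bigr do rewrite mulrBr.
have E : \sum_i y 0 i * (rh u p j *+ (j == i)) = y 0 j * rh u p j.
  rewrite (bigD1 j) //= eqxx mulr1n big1 ?addr0 // => i ij.
  by rewrite eq_sym (negbTE ij) mulr0n mulr0.
rewrite sumrB E.
rewrite mulrBr mulr_sumr; congr (_ - _); first by ring.
by apply: eq_bigr => g _; ring.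
Qed.

Lemma J_off u f g : f != g ->
  Jac x w P u f g = - expect P (fun p => rh u p f * rh u p g).
Proof.
move=> fg; rewrite Jentry /expect -sumrN; apply: eq_bigr => p _.
by rewrite (negbTE fg) mulr0n sub0r mulrN.
Qed.

Lemma J_diag u f : Jac x w P u f f =
  \sum_(g | g != f) expect P (fun p => rh u p f * rh u p g).
Proof.
rewrite Jentry /expect exchange_big /=; apply: eq_bigr => p _.
rewrite -mulr_sumr eqxx mulr1n; congr (_ * _).
have := rho_sum u p f; rewrite (bigD1 f) //= mulrDr -mulr_sumr.
by move=> E; rewrite -{1}E [_ * _ + _]addrC addrK.
Qed.

Lemma J_sym u : (Jac x w P u)^T = Jac x w P u.
Proof.
apply/matrixP => i j; rewrite mxE !Jentry; apply: eq_bigr => p _.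
by case: eqVneq => [->|_] //; rewrite [rh u p j * _]mulrC.
Qed.

Lemma J_rowsum u f : \sum_g Jac x w P u f g = 0.
Proof.
under eq_bigr do rewrite Jentry.
rewrite exchange_big /= big1 // => p _.
rewrite -mulr_sumr sumrB -mulr_sumr rho_sum.
rewrite (bigD1 f) //= eqxx mulr1n big1 ?addr0 ?subrr ?mulr0 // => g gf.
by rewrite eq_sym (negbTE gf) mulr0n.
Qed.

Lemma expect_ge0 (Pge0 : forall p, 0 <= P p) (g : T * T -> R) :
  (forall p, 0 <= g p) -> 0 <= expect P g.
Proof. by move=> H; apply: sumr_ge0 => p _; rewrite mulr_ge0. Qed.

Lemma J_off_le0 (Pge0 : forall p, 0 <= P p) u f g : f != g ->
  Jac x w P u f g <= 0.
Proof.
move=> fg; rewrite J_off // oppr_le0; apply: expect_ge0 => // p.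
by rewrite mulr_ge0 ?rho_ge0.
Qed.

Lemma J_edge (Pge0 : forall p, 0 <= P p) u f g : f != g ->
  Jac x w P u f g != 0 -> compEdge x w P f g.
Proof.
move=> fg; rewrite J_off // oppr_eq0 => Hne.
have [p Hp] : exists p, P p * (rh u p f * rh u p g) != 0.
  apply/existsP; apply: contraNT Hne; rewrite negb_exists => /forallP H.
  by apply/eqP; apply: big1 => p _; have := H p; rewrite negbK => /eqP.
move: Hp; rewrite !mulf_eq0 !negb_or => /and4P[Pp /andP[/andP[_ bf] _] /andP[_ bg] _].
have Ppos : 0 < P p by rewrite lt0r Pp Pge0.
have bfg : 0 < bb p f * bb p g.
  by rewrite mulr_gt0 // lt0r ?bf ?bg b_ge0.
rewrite /compEdge fg /=; rewrite /prob (bigD1 p) //=.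
by rewrite ltr_wpDr // sumr_ge0 // => q _; exact: Pge0.
Qed.

Lemma quad_p u p (v : 'rV[R]_n) :
  \sum_f \sum_g v 0 f * (rh u p f *+ (f == g) - rh u p f * rh u p g) * v 0 g =
  \sum_f rh u p f * v 0 f ^+ 2 - (\sum_f rh u p f * v 0 f) ^+ 2.
Proof.
under eq_bigr => f _.
  under eq_bigr => g _ do rewrite mulrBr mulrBl.
  rewrite sumrB (bigD1 f) //= eqxx mulr1n big1 ?addr0; last first.
    by move=> g gf; rewrite eq_sym (negbTE gf) mulr0n mulr0 mul0r.
  over.
rewrite sumrB expr2 mulr_suml; congr (_ - _).
  by apply: eq_bigr => f _; rewrite expr2; ring.
apply: eq_bigr => f _; rewrite mulr_sumr; apply: eq_bigr => g _; ring.
Qed.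

Lemma var_ge0 u p (v : 'rV[R]_n) :
  0 <= \sum_f rh u p f * v 0 f ^+ 2 - (\sum_f rh u p f * v 0 f) ^+ 2.
Proof.
case: (bcase p) => H.
  rewrite !big1 ?expr0n ?subr0 // => f _; by rewrite rho_zero // mul0r.
have S1 := rho_sum1 u H.
set m := \sum_f rh u p f * v 0 f.
have -> : \sum_f rh u p f * v 0 f ^+ 2 - m ^+ 2 =
    \sum_f rh u p f * (v 0 f - m) ^+ 2.
  have E : forall f, rh u p f * (v 0 f - m) ^+ 2 =
     rh u p f * v 0 f ^+ 2 - (2 * m) * (rh u p f * v 0 f) + m ^+ 2 * rh u p f.
    by move=> f; ring.
  under [RHS]eq_bigr do rewrite E.
  rewrite big_split sumrB /= -!mulr_sumr S1 -/m; ring.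
by apply: sumr_ge0 => f _; rewrite mulr_ge0 ?rho_ge0 ?sqr_ge0.
Qed.

Lemma J_quad u (v : 'rV[R]_n) : (v *m Jac x w P u *m v^T) 0 0 =
  \sum_p P p * (\sum_f rh u p f * v 0 f ^+ 2 - (\sum_f rh u p f * v 0 f) ^+ 2).
Proof.
under [RHS]eq_bigr do rewrite -quad_p.
rewrite [LHS]mxE.
under [LHS]eq_bigr => g _.
  rewrite [X in X * _]mxE [v^T g 0]mxE mulr_suml.
  under eq_bigr => f _ do rewrite Jentry mulr_sumr mulr_suml.
  rewrite exchange_big /=.
  over.
rewrite exchange_big /=; apply: eq_bigr => p _.
rewrite mulr_sumr exchange_big /=; apply: eq_bigr => f _.
rewrite mulr_sumr; apply: eq_bigr => g _; ring.
Qed.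

Lemma J_psd (Pge0 : forall p, 0 <= P p) u (v : 'rV[R]_n) :
  0 <= (v *m Jac x w P u *m v^T) 0 0.
Proof.
by rewrite J_quad; apply: sumr_ge0 => p _; rewrite mulr_ge0 ?var_ge0.
Qed.

Lemma line_diff (u D : 'rV[R]_n) (t : R) :
  is_diff t (fun s : R => u + s *: D) (fun s => s *: D).
Proof.
have K := is_diffD (is_diff_cst u t) (is_diff_scalel t D).
by eapply is_diff_ext; [exact: K| |] => y; rewrite !fctE ?add0r.
Qed.

Lemma rho_line_diff (u D : 'rV[R]_n) p f (t : R) :
  differentiable (fun s : R => rh (u + s *: D) p f) t.
Proof.
have K := is_diff_comp (line_diff u D t) (rho_diff (u + t *: D) p f).
by case: K.
Qed.

Lemma integrand_diff (u D : 'rV[R]_n) (t : R) :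
  differentiable (fun s : R => (D *m Jac x w P (u + s *: D) *m D^T) 0 0) t.
Proof.
have -> : (fun s : R => (D *m Jac x w P (u + s *: D) *m D^T) 0 0) =
  (fun s => \sum_p P p * (\sum_f rh (u + s *: D) p f * D 0 f ^+ 2 -
            (\sum_f rh (u + s *: D) p f * D 0 f) ^+ 2)).
  by apply/funext => s; rewrite J_quad.
apply: diff_bigsum => p; apply: diffM'; first exact: diffC'.
apply: diffB'.
  by apply: diff_bigsum => f; apply: diffM'; [exact: rho_line_diff|exact: diffC'].
under eq_fun do rewrite expr2.
by apply: diffM'; apply: diff_bigsum => f; apply: diffM';
  [exact: rho_line_diff|exact: diffC'|exact: rho_line_diff|exact: diffC'].
Qed.

Lemma deriv_ident (D : 'rV[R]_n) (M : 'M[R]_n) (s : R) :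
  \sum_j D 0 j *: ((s *: D) *m M^T) 0 j = s * (D *m M *m D^T) 0 0.
Proof.
rewrite [in RHS]mxE mulr_sumr.
under eq_bigr => j _ do rewrite [(_ *m _) 0 j]mxE.
under [RHS]eq_bigr => k _ do rewrite [(_ *m _) 0 k]mxE [D^T k 0]mxE mulr_suml.
under [RHS]eq_bigr => k _ do rewrite mulr_sumr.
rewrite exchange_big /=; apply: eq_bigr => j _.
rewrite -[D 0 j *: _]/(D 0 j * _) mulr_sumr; apply: eq_bigr => k _.
rewrite !mxE; ring.
Qed.

Lemma I_integral (u u' : 'rV[R]_n) :
  ((u' - u) *m (Infl x w P u' - Infl x w P u)^T) 0 0 =
  Rintegral lebesgue_measure `[0%R, 1%R]
    (fun t : R => ((u' - u) *m Jac x w P (u + t *: (u' - u)) *m (u' - u)^T) 0 0).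
Proof.
set D := u' - u.
set g := fun t : R => (D *m Jac x w P (u + t *: D) *m D^T) 0 0.
pose h := fun t : R => \sum_j D 0 j * Infl x w P (u + t *: D) 0 j.
have hd : forall t, is_diff t h (fun s => s * g t).
  move=> t.
  have Kj : forall j, is_diff t (fun s : R => D 0 j *: Infl x w P (u + s *: D) 0 j)
      (fun s => D 0 j *: ((s *: D) *m (Jac x w P (u + t *: D))^T) 0 j).
    move=> j; apply: is_diffZ.
    exact: (is_diff_comp (is_diff_comp (line_diff u D t) (I_diff _)) (is_diff_coord _ j)).
  have K := @is_diff_bigsum _ _ _ _ (index_enum 'I_n) _ _ t Kj.
  eapply is_diff_ext; [exact: K| |] => s //=.
  exact: (deriv_ident D (Jac x w P (u + t *: D)) s).
have hdiff : forall t, differentiable h t by move=> t; case: (hd t).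
have hder : forall t, derive1 h t = g t.
  move=> t; rewrite derive1E' //; case: (hd t) => _ ->; exact: mul1r.
have gcont : continuous g.
  by move=> t; apply: differentiable_continuous; exact: integrand_diff.
have hcont : continuous h.
  by move=> t; apply: differentiable_continuous; exact: hdiff.
have FTC := @continuous_FTC2 R g h 0 1 ltr01 (continuous_subspaceT gcont).
rewrite /Rintegral FTC; last 2 first.
- split.
  + by move=> t _; apply/derivable1_diffP; exact: hdiff.
  + by apply: cvg_at_right_filter; exact: hcont.
  + by apply: cvg_at_left_filter; exact: hcont.
- by move=> t _; exact: hder.
rewrite /= /h scale1r scale0r addr0 /D [u + _]addrC subrK -/D mxE -sumrB.
by apply: eq_bigr => j _; rewrite !mxE mulrBr.
Qed.

Lemma inner_expand (u u' : 'rV[R]_n) :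
  ((u' - u) *m (Infl x w P u' - Infl x w P u)^T) 0 0 =
  \sum_p P p * \sum_f (rh u' p f - rh u p f) * (u' - u) 0 f.
Proof.
rewrite mxE.
under eq_bigr => f _.
  rewrite [_^T f 0]mxE; set A := (u' - u) 0 f; rewrite !mxE /expect -sumrB mulr_sumr /A.
  over.
rewrite exchange_big /=; apply: eq_bigr => p _.
rewrite mulr_sumr; apply: eq_bigr => f _; ring.
Qed.

Lemma term_ge0 (y : R) : 0 <= (expR y - 1) * y.
Proof.
case: (leP 0 y) => Hy.
  apply: mulr_ge0 => //; rewrite subr_ge0 leNgt expR_lt1 -leNgt //.
apply: mulr_le0; last exact: ltW.
by rewrite subr_le0 expR_le1 ltW.
Qed.

Lemma term_eq0 (y : R) : (expR y - 1) * y = 0 -> y = 0.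
Proof.
move/eqP; rewrite mulf_eq0 => /orP[|/eqP //].
by rewrite subr_eq0 -expR0 => /eqP /expR_inj.
Qed.

Lemma rho_shift u u' p f : (exists k, 0 < bb p k) ->
  rh u' p f = rh u p f * expR ((u' - u) 0 f - (ln (Z u' p) - ln (Z u p))).
Proof.
move=> H; have Zp := Z_pos u H; have Zp' := Z_pos u' H.
rewrite !expRB !lnK ?posrE // mxE [(- u) 0 f]mxE expRD expRN /rho.
have := expR_gt0 (u 0 f); have := expR_gt0 (u' 0 f).
move=> e1 e2; field.
by rewrite !lt0r_neq0.
Qed.

Lemma Dp_expand u u' p : (exists k, 0 < bb p k) ->
  \sum_f (rh u' p f - rh u p f) * (u' - u) 0 f =
  \sum_f rh u p f * ((expR ((u' - u) 0 f - (ln (Z u' p) - ln (Z u p))) - 1) *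
                      ((u' - u) 0 f - (ln (Z u' p) - ln (Z u p)))).
Proof.
move=> H; set c := ln (Z u' p) - ln (Z u p).
have E : \sum_f (rh u' p f - rh u p f) * c = 0.
  by rewrite -mulr_suml sumrB !rho_sum1 // subrr mul0r.
rewrite -[LHS]subr0 -[X in _ - X = _]E -sumrB; apply: eq_bigr => f _.
rewrite (@rho_shift u u' p f H) -/c; ring.
Qed.

Lemma Dp_ge0 u u' p : 0 <= \sum_f (rh u' p f - rh u p f) * (u' - u) 0 f.
Proof.
case: (bcase p) => H.
  by rewrite big1 // => f _; rewrite !rho_zero // subrr mul0r.
rewrite Dp_expand //; apply: sumr_ge0 => f _.
by rewrite mulr_ge0 ?rho_ge0 ?term_ge0.
Qed.

Lemma Dp_eq0 u u' p f : 0 < bb p f ->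
  \sum_f (rh u' p f - rh u p f) * (u' - u) 0 f = 0 ->
  (u' - u) 0 f = ln (Z u' p) - ln (Z u p).
Proof.
move=> bf; have H : exists k, 0 < bb p k by exists f.
rewrite Dp_expand // => E.
have rf : 0 < rh u p f.
  by rewrite /rho divr_gt0 ?mulr_gt0 ?expR_gt0 ?Z_pos.
have := @psumr_eq0P _ _ predT _ (fun i _ => mulr_ge0 (rho_ge0 _ _ _) (term_ge0 _)) E f isT.
move=> /eqP; rewrite mulf_eq0 (gt_eqF rf) /= => /eqP /term_eq0 /eqP.
by rewrite subr_eq0 => /eqP.
Qed.

Lemma edge_pos (Pge0 : forall p, 0 <= P p) f g : compEdge x w P f g ->
  exists p, [/\ 0 < P p, 0 < bb p f & 0 < bb p g].
Proof.
rewrite /compEdge => /andP[fg]; rewrite /prob => Hp.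
have [p /andP[bfg Pp]] := psumr_neq0P (fun p _ => Pge0 p) (fun E : _ = 0 => elimF eqP (gt_eqF Hp) E).
exists p; split => //.
  rewrite lt0r b_ge0 andbT; apply/eqP => E; by rewrite E mul0r ltxx in bfg.
rewrite lt0r b_ge0 andbT; apply/eqP => E; by rewrite E mulr0 ltxx in bfg.
Qed.

Lemma I_eq_connect (Pge0 : forall p, 0 <= P p) (u u' : 'rV[R]_n) :
  Infl x w P u' = Infl x w P u ->
  forall f g, connect (compEdge x w P) f g -> (u' - u) 0 f = (u' - u) 0 g.
Proof.
move=> HI.
have E0 : \sum_p P p * \sum_f (rh u' p f - rh u p f) * (u' - u) 0 f = 0.
  by rewrite -inner_expand HI subrr trmx0 mulmx0 mxE.
have Ep : forall p, 0 < P p -> \sum_f (rh u' p f - rh u p f) * (u' - u) 0 f = 0.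
  move=> p Pp.
  have := @psumr_eq0P _ _ predT _ (fun p _ => mulr_ge0 (Pge0 p) (Dp_ge0 u u' p)) E0 p isT.
  by move/eqP; rewrite mulf_eq0 (gt_eqF Pp) /= => /eqP.
have edge : forall f g, compEdge x w P f g -> (u' - u) 0 f = (u' - u) 0 g.
  move=> f g /(edge_pos Pge0) [p [Pp bf bg]].
  by rewrite (Dp_eq0 bf (Ep p Pp)) (Dp_eq0 bg (Ep p Pp)).
move=> f g /connectP [s pth ->]; elim: s f pth => [|h s IH] f //= /andP[Gfh pth].
by rewrite (edge _ _ Gfh) IH.
Qed.

Lemma connect_I_eq (Pge0 : forall p, 0 <= P p) (u u' : 'rV[R]_n) :
  (forall f g, connect (compEdge x w P) f g -> (u' - u) 0 f = (u' - u) 0 g) ->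
  Infl x w P u' = Infl x w P u.
Proof.
move=> Hc; apply/rowP => f; rewrite !mxE /expect; apply: eq_bigr => p _.
have [P0|Pp] := eqVneq (P p) 0; first by rewrite P0 !mul0r.
have Ppos : 0 < P p by rewrite lt0r Pp Pge0.
congr (_ * _).
case: (bcase p) => H; first by rewrite !rho_zero.
have [k0 bk0] := H.
set c := (u' - u) 0 k0.
have Hk : forall k, 0 < bb p k -> u' 0 k = u 0 k + c.
  move=> k bk.
  have -> : c = (u' - u) 0 k.
    have [<-//|kk] := eqVneq k0 k.
    apply: Hc; apply: connect1; rewrite /compEdge kk /= /prob (bigD1 p) /=;
      last by rewrite mulr_gt0.
    by rewrite ltr_wpDr // sumr_ge0 // => q _; exact: Pge0.
  by rewrite !mxE [u 0 k + _]addrC subrK.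
have Zs' : Z u' p = expR c * Z u p.
  rewrite /Zs mulr_sumr; apply: eq_bigr => k _.
  have [bk|bk] := eqVneq (bb p k) 0; first by rewrite bk !mulr0.
  have bkp : 0 < bb p k by rewrite lt0r bk b_ge0.
  by rewrite (Hk k bkp) expRD; ring.
have Zp := Z_pos u H.
rewrite /rho Zs'.
have [bf|bf] := eqVneq (bb p f) 0; first by rewrite bf !mulr0 !mul0r.
have bfp : 0 < bb p f by rewrite lt0r bf b_ge0.
rewrite (Hk f bfp) expRD.
have := expR_gt0 c; move=> ec; field.
by rewrite !lt0r_neq0.
Qed.

End Model.

Theorem theorem4p6 (R : realType) (T : finType) (d : nat)
  (x : T -> 'I_d -> R) (w : 'I_d -> R) (P : T * T -> R) :
  (forall p, 0 <= P p) -> \sum_p P p = 1 ->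
  (forall p, 0 < P p -> 0 < \sum_(k in Fstar x w P) bf x p k) ->
  let I := Infl x w P in
  let Phi := Phi x w P in
  let J := Jac x w P in
  let rho := rho x w P in
  let E := expect P in
  let G := compEdge x w P in
  (* (1) I = grad Phi *)
  (forall u, differentiable Phi u /\
     ('d Phi u : _ -> _) = (fun v => (v *m (I u)^T) 0 0)) /\
  (* (2) J = Jacobian of I = Hessian of Phi, and its structure *)
  (forall u, differentiable I u /\
     ('d I u : _ -> _) = (fun v => v *m (J u)^T)) /\
  (forall u,
     (forall f g, f != g ->
        J u f g = - E (fun p => rho u p f * rho u p g) /\ J u f g <= 0) /\
     (forall f, J u f f = \sum_(g | g != f) E (fun p => rho u p f * rho u p g)) /\
     (J u)^T = J u /\
     (forall v : 'rV[R]_(nF x w P), 0 <= (v *m J u *m v^T) 0 0) /\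
     (forall f, \sum_g J u f g = 0) /\
     (forall f g, f != g -> J u f g != 0 -> G f g)) /\
  (* (3) monotonicity / integral formula *)
  (forall u u',
     ((u' - u) *m (I u' - I u)^T) 0 0 =
       Rintegral lebesgue_measure `[0%R, 1%R]
         (fun t : R => ((u' - u) *m J (u + t *: (u' - u)) *m (u' - u)^T) 0 0) /\
     0 <= ((u' - u) *m (I u' - I u)^T) 0 0) /\
  (* (4) characterization of equal influence structures *)
  (forall u u', I u' = I u <->
     (forall f g, connect G f g -> (u' - u) 0 f = (u' - u) 0 g)) /\
  ((forall f g, connect G f g) ->
     forall u u', I u' = I u <-> exists c : R, u' = u + c *: const_mx 1).
Proof.
move=> Pge0 _ _ I Phi' J rho' E G.
rewrite /I /Phi' /J /rho' /E /G.
split.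
  by move=> u; case: (Phi_diff (x:=x) (w:=w) (P:=P) u).
split.
  by move=> u; case: (I_diff (x:=x) (w:=w) (P:=P) u).
split.
  move=> u; split.
    by move=> f g fg; split; [exact: J_off | exact: J_off_le0].
  split; first exact: J_diag.
  split; first exact: J_sym.
  split; first exact: J_psd.
  split; first exact: J_rowsum.
  exact: J_edge.
split.
  move=> u u'; split; first exact: I_integral.
  rewrite I_integral; apply: Rintegral_ge0 => t _; exact: J_psd.
split.
  by move=> u u'; split; [exact: I_eq_connect | exact: connect_I_eq].
move=> Hconn u u'; split.
  move=> HI; have H := I_eq_connect Pge0 HI.
  case: (pickP (@predT 'I_(nF x w P))) => [j0 _|none].
    exists ((u' - u) 0 j0); apply/rowP => j.
    have Hj := H j j0 (Hconn j j0).
    move: Hj; rewrite !mxE => Hj; by rewrite mulr1 -Hj addrC subrK.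
  by exists 0; apply/rowP => j; have := none j.
move=> [c ->]; apply: connect_I_eq => // f g _.
by rewrite !mxE [LHS]addrAC [RHS]addrAC !subrr !add0r.
Qed.
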